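(* Let $m,k,\Delta \in \mathbb{Z}_{>0}$ with $m > k$. (i) If no Sauer Matrix of size $k$ is feasible for translations, then \[ h_s(m) \le 2\sum_{i=0}^{k-1}\binom{m}{i} \in \mathcal{O}(m^{k-1}). \] (ii) If no Sauer Matrix $S$ of size $k$ admits a translation vector $t \in [0,1)^k \cap (\tfrac1\Delta\mathbb{Z})^k\setminus\{\mathbf 0\}$ such that $t+S$ is totally $1$-submodular, then \[ h_s^{\Delta}(m) \le 2\sum_{i=0}^{k-1}\binom{m}{i} \in \mathcal{O}(m^{k-1}). \]
   Context: A real matrix is totally $1$-submodular if every square submatrix (of every size) has determinant of absolute value at most $1$. For $t\in\mathbb{R}^m$ and a matrix $A$ with columns $A_1,\dots,A_n$, $t+A$ is the matrix with columns $t+A_i$. The shifted Heller constant $h_s(m)$ is the maximum $n$ such that there exist $t \in [0,1)^m\setminus\{\mathbf 0\}$ and $A \in \{-1,0,1\}^{m\times n}$ with pairwise distinct columns such that $t+A$ is totally $1$-submodular; for an integer $\delta\ge2$, $h_s^\delta(m)$ is defined the same way but with $t \in [0,1)^m\cap(\tfrac1\delta\mathbb{Z})^m\setminus\{\mathbf 0\}$ (in (ii) the quantity $h_s^{\Delta}(m)$ is thus meant for $\Delta\ge 2$). A Sauer Matrix of size $k$ is a matrix $S\in\{-1,0,1\}^{k\times 2^k}$ whose columns have pairwise distinct supports, so that every subset of $[k]$ is the support (set of nonzero coordinates) of exactly one column, the nonzero entries being arbitrary elements of $\{-1,1\}$. A vector $r\in[0,1)^k$ is feasible for $S$ if $r+S$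 is totally $1$-submodular; $S$ is feasible for translations if some $r\in[0,1)^k$ is feasible for $S$. *)

(* Defs.v *)
From HB Require Import structures.
From mathcomp Require Import all_boot all_order all_algebra.
From mathcomp Require Import reals.
Set Implicit Arguments. Unset Strict Implicit. Unset Printing Implicit Defensive.
Import Order.TTheory GRing.Theory Num.Theory.
Local Open Scope ring_scope.

Definition tot1sub (R : realType) (m n : nat) (M : 'M[R]_(m, n)) : Prop :=
  forall (p : nat) (f : 'I_p -> 'I_m) (g : 'I_p -> 'I_n),
    injective f -> injective g -> `|\det (mxsub f g M)| <= 1.

Definition translate (R : realType) (m n : nat) (t : 'cV[R]_m) (A : 'M[R]_(m, n))
  : 'M[R]_(m, n) := \matrix_(i, j) (t i 0 + A i j).

Definition ternary (R : realType) (m n : nat) (A : 'M[R]_(m, n)) : Prop :=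
  forall i j, A i j \in [:: -1; 0; 1].

Definition in_unit_cube (R : realType) (m : nat) (t : 'cV[R]_m) : Prop :=
  forall i, 0 <= t i 0 < 1.

Definition in_grid (R : realType) (m Delta : nat) (t : 'cV[R]_m) : Prop :=
  forall i, exists z : int, t i 0 = z%:~R / Delta%:R.

(* n is attained in the definition of h_s(m): there are t in [0,1)^m \ {0}
   and A in {-1,0,1}^{m x n} with pairwise distinct columns and t+A totally
   1-submodular.  h_s(m) is the maximum such n. *)
Definition shifted_heller_witness (R : realType) (m n : nat) : Prop :=
  exists (t : 'cV[R]_m) (A : 'M[R]_(m, n)),
    [/\ in_unit_cube t, t != 0, ternary A, injective (fun j => col j A)
      & tot1sub (translate t A)].

(* same for h_s^Delta(m): additionally t in (1/Delta Z)^m. *)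
Definition shifted_heller_delta_witness (R : realType) (m Delta n : nat) : Prop :=
  exists (t : 'cV[R]_m) (A : 'M[R]_(m, n)),
    [/\ in_unit_cube t /\ in_grid Delta t, t != 0, ternary A,
        injective (fun j => col j A) & tot1sub (translate t A)].

Definition col_support (R : realType) (k n : nat) (S : 'M[R]_(k, n)) (j : 'I_n)
  : {set 'I_k} := [set i | S i j != 0].

Definition sauer_matrix (R : realType) (k : nat) (S : 'M[R]_(k, 2 ^ k)) : Prop :=
  ternary S /\ forall X : {set 'I_k}, exists! j : 'I_(2 ^ k), col_support S j = X.

Definition feasible_vec (R : realType) (k : nat) (S : 'M[R]_(k, 2 ^ k)) (r : 'cV[R]_k)
  : Prop := in_unit_cube r /\ tot1sub (translate r S).

Definition feasible_for_translations (R : realType) (k : nat) (S : 'M[R]_(k, 2 ^ k))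
  : Prop := exists r : 'cV[R]_k, feasible_vec S r.

Definition heller_bound (m k : nat) : nat := (2 * \sum_(i < k) 'C(m, i))%N.

(* Main.v *)
Require Import Defs.
From HB Require Import structures.
From mathcomp Require Import all_boot all_order all_algebra.
From mathcomp Require Import reals.
From mathcomp Require Import ring lra zify.
Import Order.TTheory GRing.Theory Num.Theory.
Set Implicit Arguments. Unset Strict Implicit. Unset Printing Implicit Defensive.


Section SS.
Variable T : finType.

Definition shatters (F : {set {set T}}) (S : {set T}) : bool :=
  [forall Y : {set T}, (Y \subset S) ==> [exists X in F, X :&: S == Y]].

Lemma shattersP (F : {set {set T}}) (S : {set T}) :
  reflect (forall Y : {set T}, Y \subset S -> exists2 X, X \in F & X :&: S = Y) (shatters F S).
Proof.
apply: (iffP forallP) => [H Y sYS|H Y].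
  have /implyP/(_ sYS)/existsP[X /andP[XF /eqP E]] := H Y.
  by exists X.
apply/implyP => sYS; have [X XF E] := H Y sYS.
by apply/existsP; exists X; rewrite XF E eqxx.
Qed.

Lemma shatters_sub (F : {set {set T}}) (S S' : {set T}) : shatters F S -> S' \subset S -> shatters F S'.
Proof.
move=> /shattersP H sS; apply/shattersP => Y sY.
have [X XF E] := H Y (subset_trans sY sS).
exists X => //; apply/setP => z; move/setP: E => /(_ z).
rewrite !inE => E; apply/idP/idP.
  move=> /andP[zX zS']; rewrite -E zX /=; exact: (subsetP sS).
by move=> zY; rewrite (subsetP sY) // andbT; move: zY; rewrite -E => /andP[].
Qed.

Lemma pajor n : forall (D : {set T}) (F : {set {set T}}), #|D| <= n ->
  (forall X, X \in F -> X \subset D) -> #|F| <= #|[set S | shatters F S]|.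
Proof.
elim: n => [|n IH] D F HD HF.
  have D0 : D = set0 by apply/eqP; rewrite -cards_eq0 -leqn0.
  have sF : F \subset [set set0].
    apply/subsetP => X XF; rewrite inE; apply/eqP.
    by apply/eqP; rewrite -subset0 -D0 HF.
  case: (set_0Vmem F) => [->|[X0 X0F]]; first by rewrite cards0.
  apply: (leq_trans (subset_leq_card sF)); rewrite cards1 card_gt0.
  apply/set0Pn; exists set0; rewrite inE; apply/shattersP => Y.
  rewrite subset0 => /eqP ->; exists X0 => //; exact: setI0.
case: (leqP #|D| n) => [HDn|HDn]; first exact: (IH D).
have [x xD] : exists x, x \in D.
  by apply/set0Pn; rewrite -card_gt0 (leq_trans _ HDn).
pose A := [set X in F | x \notin X].
pose B := [set X in F | x \in X].
pose f := fun X : {set T} => X :\ x.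
pose F1 := A :|: f @: B.
pose F2 := A :&: f @: B.
have HD' : #|D :\ x| <= n by move: HD; rewrite (cardsD1 x D) xD.
have notx1 : forall X, X \in F1 -> x \notin X.
  move=> X; rewrite inE => /orP[|/imsetP[Y _ ->]]; last by rewrite !inE eqxx.
  by rewrite inE => /andP[].
have notx2 : forall X, X \in F2 -> x \notin X.
  by move=> X; rewrite inE => /andP[XA _]; apply: notx1; rewrite inE XA.
have sub1 : forall X, X \in F1 -> X \subset D :\ x.
  move=> X XF1; apply/subsetP => z zX; rewrite !inE.
  have -> /= : z != x by apply: contraNneq (notx1 _ XF1) => <-.
  move: XF1; rewrite inE => /orP[|/imsetP[Y]]; rewrite inE => /andP[YF _].
    by apply: (subsetP (HF _ YF)).
  by move=> E; move: zX; rewrite E !inE => /andP[_]; apply: (subsetP (HF _ YF)).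
have sub2 : forall X, X \in F2 -> X \subset D :\ x.
  by move=> X; rewrite inE => /andP[XA _]; apply: sub1; rewrite inE XA.
have IH1 := IH _ F1 HD' sub1.
have IH2 := IH _ F2 HD' sub2.
have cardF : #|F| = #|F1| + #|F2|.
  have finj : {in B &, injective f}.
    move=> X Y; rewrite !inE => /andP[_ xX] /andP[_ xY] E.
    by rewrite -(setD1K xX) -(setD1K xY); congr (_ |: _).
  rewrite cardsUI (card_in_imset finj) -(cardsID [set X : {set T} | x \in X] F) addnC; congr (_ + _).
    by apply: eq_card => X; rewrite !inE andbC.
  by apply: eq_card => X; rewrite !inE andbC.
pose g := fun S : {set T} => x |: S.
have sh1 : forall S, shatters F1 S -> shatters F S /\ x \notin S.
  move=> S /shattersP H.
  have xS : x \notin S.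
    have [X XF1 E] := H S (subxx S).
    apply/negP => xS; move: (notx1 _ XF1); suff -> : x \in X by [].
    by move/setP: E => /(_ x); rewrite !inE xS andbT => ->.
  split=> //; apply/shattersP => Y sY.
  have [X XF1 E] := H Y sY.
  have [X' X'F EX] : exists2 X', X' \in F & X = X' :\ x.
    move: XF1; rewrite inE => /orP[|/imsetP[Z]]; rewrite inE => /andP[ZF xZ].
      exists X => //; apply/setP => z; rewrite !inE; case: eqP => // ->.
      by rewrite (negbTE xZ).
    by move=> ->; exists Z.
  exists X' => //; rewrite -E EX; apply/setP => z; rewrite !inE.
  by case: eqP => // ->; rewrite (negbTE xS) andbF.
have sh2 : forall S, shatters F2 S -> shatters F (x |: S) /\ x \notin S.
  move=> S /shattersP H.
  have xS : x \notin S.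
    have [X XF2 E] := H S (subxx S).
    apply/negP => xS; move: (notx2 _ XF2); suff -> : x \in X by [].
    by move/setP: E => /(_ x); rewrite !inE xS andbT => ->.
  split=> //; apply/shattersP => Y sY.
  have sY' : Y :\ x \subset S.
    apply/subsetP => z; rewrite !inE => /andP[zx zY].
    by move: (subsetP sY z zY); rewrite !inE (negbTE zx).
  have [X XF2 E] := H _ sY'.
  have xX := notx2 _ XF2.
  move: XF2; rewrite !inE => /andP[/andP[XF _] /imsetP[Z]].
  rewrite inE => /andP[ZF xZ] EZ.
  have EZ' : Z = x |: X by rewrite EZ setD1K.
  case xY : (x \in Y).
    exists Z => //; rewrite EZ'; apply/setP => z; move/setP: E => /(_ z).
    rewrite !inE; case: (eqVneq z x) => [->|zx] /=; first by rewrite xY.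
    by [].
  exists X => //; apply/setP => z; move/setP: E => /(_ z).
  rewrite !inE; case: (eqVneq z x) => [->|zx] /=; last by [].
  by rewrite xY (negbTE xX).
have disj : [set S | shatters F1 S] :&: g @: [set S | shatters F2 S] = set0.
  apply/setP => S; rewrite !inE; apply/negP => /andP[/sh1[_ xS] /imsetP[S' _ ES]].
  by move: xS; rewrite ES !inE eqxx.
have ginj : {in [set S | shatters F2 S] &, injective g}.
  move=> S1 S2; rewrite !inE => /sh2[_ x1] /sh2[_ x2] E.
  by rewrite -(setU1K x1) -(setU1K x2); congr (_ :\ _).
have sub : [set S | shatters F1 S] :|: g @: [set S | shatters F2 S]
             \subset [set S | shatters F S].
  apply/subsetP => S; rewrite !inE => /orP[/sh1[]//|/imsetP[S' ]].
  by rewrite inE => /sh2[H _] ->.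
apply: (leq_trans _ (subset_leq_card sub)).
rewrite cardsU disj cards0 subn0 card_in_imset // cardF.
exact: leq_add.
Qed.

Lemma card_small k : #|[set S : {set T} | #|S| < k]| = \sum_(i < k) 'C(#|T|, i).
Proof.
elim: k => [|k IH].
  by rewrite big_ord0; apply/eqP; rewrite cards_eq0; apply/eqP/setP => S; rewrite !inE.
rewrite big_ord_recr /= -IH -card_draws.
rewrite -(cardsID [set S : {set T} | #|S| == k] [set S : {set T} | #|S| < k.+1]) addnC.
congr (_ + _); apply: eq_card => S; rewrite !inE ltnS leq_eqVlt.
  by case: eqP => [->|] /=; [rewrite ltnn | ].
by case: eqP => [->|]; rewrite ?eqxx ?andbF.
Qed.

Lemma sub_card k : forall n (S : {set T}), #|S| = n + k ->
  exists2 S' : {set T}, S' \subset S & #|S'| = k.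
Proof.
elim=> [|n IH] S HS; first by exists S.
have [x xS] : exists x, x \in S by apply/set0Pn; rewrite -card_gt0 HS.
have HS' : #|S :\ x| = n + k by move: HS; rewrite (cardsD1 x) xS addSn => -[].
have [S' sS' cS'] := IH (S :\ x) HS'.
by exists S' => //; apply: (subset_trans sS'); apply: subD1set.
Qed.

Lemma sauer_shelah k (F : {set {set T}}) :
  \sum_(i < k) 'C(#|T|, i) < #|F| -> exists2 S : {set T}, shatters F S & #|S| = k.
Proof.
move=> H.
have cT : #|[set: T]| <= #|T| by rewrite cardsT.
have P := @pajor #|T| [set: T] F cT (fun X _ => subsetT X).
have : ~~ ([set S | shatters F S] \subset [set S : {set T} | #|S| < k]).
  apply/negP => /subset_leq_card; rewrite card_small => H2.
  by move: (leq_trans P H2); rewrite leqNgt H.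
case/subsetPn => S; rewrite !inE -leqNgt => shS kS.
have cS : #|S| = (#|S| - k) + k by rewrite subnK.
have [S' sS' cS'] := @sub_card k (#|S| - k) S cS.
by exists S' => //; apply: shatters_sub sS'.
Qed.
End SS.

Local Open Scope ring_scope.

Section Mx.
Variable R : realType.

Lemma det2F (F : nat -> nat -> R) :
  \det (\matrix_(i < 2, j < 2) F i j) = F 0%N 0%N * F 1%N 1%N - F 0%N 1%N * F 1%N 0%N.
Proof.
rewrite (expand_det_row _ 0) !big_ord_recl big_ord0 /cofactor !det_mx11 !mxE /=.
rewrite /bump /= expr0 expr1. ring.
Qed.

Lemma det3F (F : nat -> nat -> R) :
  \det (\matrix_(i < 3, j < 3) F i j) =
    F 0%N 0%N * (F 1%N 1%N * F 2%N 2%N - F 1%N 2%N * F 2%N 1%N)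
  - F 0%N 1%N * (F 1%N 0%N * F 2%N 2%N - F 1%N 2%N * F 2%N 0%N)
  + F 0%N 2%N * (F 1%N 0%N * F 2%N 1%N - F 1%N 1%N * F 2%N 0%N).
Proof.
rewrite (expand_det_row _ 0) !big_ord_recl big_ord0 /cofactor.
rewrite !(expand_det_row _ 0) !big_ord_recl big_ord0 /cofactor !det_mx11 !mxE /=.
rewrite /bump /= !big_ord0 !addn0 !add0n -[(1+1)%N]/2%N !expr0 !expr1 expr2. ring.
Qed.

Lemma tot1sub_mxsub m n p q (M : 'M[R]_(m, n)) (f : 'I_p -> 'I_m) (g : 'I_q -> 'I_n) :
  tot1sub M -> injective f -> injective g -> tot1sub (mxsub f g M).
Proof.
move=> H fi gi r f' g' fi' gi'; rewrite -mxsub_comp; apply: H.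
  by move=> x y /fi /fi'.
by move=> x y /gi /gi'.
Qed.

Lemma tot1sub_entry m n (M : 'M[R]_(m, n)) i j : tot1sub M -> `|M i j| <= 1.
Proof.
move=> H; have := H 1%N (fun _ => i) (fun _ => j).
rewrite det_mx11 mxE; apply.
  by move=> [[|?] ?] [[|?] ?] //= _; apply/val_inj.
by move=> [[|?] ?] [[|?] ?] //= _; apply/val_inj.
Qed.

Lemma nth_inj2 T : forall (a b : T) (x y : 'I_2), a <> b ->
  nth a [:: a; b] x = nth a [:: a; b] y -> x = y.
Proof.
by move=> a b [[|[|?]] ?] [[|[|?]] ?] //= ab E; (apply/val_inj => //); case: ab.
Qed.

Lemma nth_inj3 T : forall (a b c : T) (x y : 'I_3), a <> b -> a <> c -> b <> c ->
  nth a [:: a; b; c] x = nth a [:: a; b; c] y -> x = y.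
Proof.
move=> a b c [[|[|[|?]]] ?] [[|[|[|?]]] ?] //= ab ac bc E; (apply/val_inj => //);
  by [case: ab | case: ac | case: bc | case: ab; rewrite E | case: ac; rewrite E | case: bc; rewrite E].
Qed.

Lemma tot1sub_2 m n (M : 'M[R]_(m, n)) i0 i1 j0 j1 : tot1sub M ->
  i0 <> i1 -> j0 <> j1 ->
  `|M i0 j0 * M i1 j1 - M i0 j1 * M i1 j0| <= 1.
Proof.
move=> H ni nj.
have := H 2%N (fun x => nth i0 [:: i0; i1] x) (fun x => nth j0 [:: j0; j1] x)
  (fun x y => @nth_inj2 _ i0 i1 x y ni) (fun x y => @nth_inj2 _ j0 j1 x y nj).
have -> : mxsub (fun x : 'I_2 => nth i0 [:: i0; i1] x) (fun x : 'I_2 => nth j0 [:: j0; j1] x) M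
  = \matrix_(i < 2, j < 2) (fun a b => M (nth i0 [:: i0; i1] a) (nth j0 [:: j0; j1] b)) i j.
  by apply/matrixP => i j; rewrite !mxE.
by rewrite (det2F (fun a b => M (nth i0 [:: i0; i1] a) (nth j0 [:: j0; j1] b))).
Qed.

Lemma tot1sub_3 m n (M : 'M[R]_(m, n)) i0 i1 i2 j0 j1 j2 : tot1sub M ->
  i0 <> i1 -> i0 <> i2 -> i1 <> i2 -> j0 <> j1 -> j0 <> j2 -> j1 <> j2 ->
  `|M i0 j0 * (M i1 j1 * M i2 j2 - M i1 j2 * M i2 j1)
  - M i0 j1 * (M i1 j0 * M i2 j2 - M i1 j2 * M i2 j0)
  + M i0 j2 * (M i1 j0 * M i2 j1 - M i1 j1 * M i2 j0)| <= 1.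
Proof.
move=> H n01 n02 n12 m01 m02 m12.
have := H 3%N (fun x => nth i0 [:: i0; i1; i2] x) (fun x => nth j0 [:: j0; j1; j2] x)
  (fun x y => @nth_inj3 _ i0 i1 i2 x y n01 n02 n12)
  (fun x y => @nth_inj3 _ j0 j1 j2 x y m01 m02 m12).
have -> : mxsub (fun x : 'I_3 => nth i0 [:: i0; i1; i2] x)
   (fun x : 'I_3 => nth j0 [:: j0; j1; j2] x) M
  = \matrix_(i < 3, j < 3) (fun a b => M (nth i0 [:: i0; i1; i2] a)
                                         (nth j0 [:: j0; j1; j2] b)) i j.
  by apply/matrixP => i j; rewrite !mxE.
by rewrite (det3F (fun a b => M (nth i0 [:: i0; i1; i2] a) (nth j0 [:: j0; j1; j2] b))).
Qed.

End Mx.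

Local Open Scope ring_scope.

Section Mult.
Variable R : realType.

Lemma tern4 (a b c d : R) : a \in [:: -1; 0; 1] -> b \in [:: -1; 0; 1] ->
  c \in [:: -1; 0; 1] -> d \in [:: -1; 0; 1] ->
  (a == 0) = (c == 0) -> (b == 0) = (d == 0) -> `|a * b - c * d| <= 1 -> a * b = c * d.
Proof.
rewrite !inE => /or3P[]/eqP-> /or3P[]/eqP-> /or3P[]/eqP-> /or3P[]/eqP->;
  rewrite ?eqxx ?oppr_eq0 ?oner_eq0 //= => _ _; rewrite ler_norml => /andP[];
  lra.
Qed.

Lemma tern2 (a b : R) : a \in [:: -1; 0; 1] -> b \in [:: -1; 0; 1] ->
  a != 1 -> b != 1 -> (a == 0) = (b == 0) -> a = b.
Proof.
rewrite !inE => /or3P[]/eqP-> /or3P[]/eqP->;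
  by rewrite ?eqxx ?oppr_eq0 ?oner_eq0.
Qed.

Lemma pm1_pigeon (x y z : R) : x \in [:: -1; 0; 1] -> y \in [:: -1; 0; 1] ->
  z \in [:: -1; 0; 1] -> x != 0 -> y != 0 -> z != 0 -> [\/ x = y, x = z | y = z].
Proof.
rewrite !inE => /or3P[]/eqP-> /or3P[]/eqP-> /or3P[]/eqP->;
  rewrite ?eqxx ?oppr_eq0 ?oner_eq0 //= => _ _ _;
  by [apply: Or31 | apply: Or32 | apply: Or33].
Qed.

Lemma card_le2 (T : finType) (P : {set T}) :
  (forall x y z, x \in P -> y \in P -> z \in P -> [\/ x = y, x = z | y = z]) ->
  (#|P| <= 2)%N.
Proof.
move=> H; rewrite leqNgt; apply/negP => HP.
have [x xP] : exists x, x \in P by apply/set0Pn; rewrite -card_gt0 (leq_trans _ HP).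
have H1 : (1 < #|P :\ x|)%N by move: HP; rewrite (cardsD1 x) xP.
have [y yP] : exists y, y \in P :\ x by apply/set0Pn; rewrite -card_gt0 (leq_trans _ H1).
have H2 : (0 < #|P :\ x :\ y|)%N by move: H1; rewrite (cardsD1 y) yP.
have [z zP] : exists z, z \in P :\ x :\ y by apply/set0Pn; rewrite -card_gt0.
move: yP zP; rewrite !inE => /andP[yx yP] /andP[zy /andP[zx zP]].
by case: (H x y z xP yP zP) => E; move: yx zx zy; rewrite E eqxx // andbF.
Qed.

Variables (m n : nat) (t : 'cV[R]_m) (A : 'M[R]_(m, n)).
Hypotheses (tU : in_unit_cube t) (tA : ternary A)
  (Ainj : injective (fun j => col j A)) (tT : tot1sub (translate t A)).

Lemma pos_row l c : 0 < t l 0 -> A l c != 1.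
Proof.
move=> tp; apply/eqP => E; have := tot1sub_entry l c tT.
rewrite mxE E ler_norml => /andP[_]; lra.
Qed.

Lemma supp_eq c d : col_support A c = col_support A d -> forall l, (A l c == 0) = (A l d == 0).
Proof.
move/setP => E l; move: (E l); rewrite !inE => E'.
by apply: negb_inj.
Qed.

Lemma zero_rows c d i l : col_support A c = col_support A d ->
  t i 0 = 0 -> t l 0 = 0 -> A i c * A l d = A i d * A l c.
Proof.
move=> Hs ti tl.
have [->|il] := eqVneq i l; first by rewrite mulrC.
have [->|cd] := eqVneq c d; first by rewrite mulrC.
have il' : i <> l by apply/eqP.
have cd' : c <> d by apply/eqP.
have := tot1sub_2 tT il' cd'.
rewrite !mxE ti tl !add0r => H.
apply: tern4 => //; first exact: supp_eq.
by rewrite (supp_eq Hs l).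
Qed.

Lemma col_eq c d : (forall l, A l c = A l d) -> c = d.
Proof. by move=> H; apply: Ainj; apply/matrixP => i j; rewrite !mxE. Qed.

Lemma t_cases l : t l 0 = 0 \/ 0 < t l 0.
Proof.
have /andP[t0 _] := tU l; move: t0; rewrite le_eqVlt => /orP[/eqP<-|->]; by [left|right].
Qed.

Lemma pos_eq c d l : col_support A c = col_support A d -> 0 < t l 0 -> A l c = A l d.
Proof.
move=> Hs tp; apply: tern2 => //; try exact: pos_row; exact: supp_eq.
Qed.

Lemma key c d i : col_support A c = col_support A d -> t i 0 = 0 ->
  A i c != 0 -> A i c = A i d -> c = d.
Proof.
move=> Hs ti Ac E; apply: col_eq => l; case: (t_cases l) => tl; last exact: pos_eq.
have := zero_rows Hs ti tl; rewrite -E => /(mulfI Ac) ->. done.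
Qed.

Lemma key0 c d : col_support A c = col_support A d ->
  (forall i, t i 0 = 0 -> A i c = 0) -> c = d.
Proof.
move=> Hs H; apply: col_eq => l; case: (t_cases l) => tl; last exact: pos_eq.
have Hc := H l tl; have := supp_eq Hs l; rewrite Hc eqxx => /esym/eqP ->. done.
Qed.

Lemma mult X : (#|[set j | col_support A j == X]| <= 2)%N.
Proof.
apply: card_le2 => x y z; rewrite !inE => /eqP Hx /eqP Hy /eqP Hz.
have Exy : col_support A x = col_support A y by rewrite Hx Hy.
have Exz : col_support A x = col_support A z by rewrite Hx Hz.
have Eyz : col_support A y = col_support A z by rewrite Hy Hz.
case: (pickP (fun i => (t i 0 == 0) && (A i x != 0))) => [i /andP[/eqP ti Ax]|none].
  have Ay : A i y != 0 by rewrite -(supp_eq Exy).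
  have Az : A i z != 0 by rewrite -(supp_eq Exz).
  case: (pm1_pigeon (tA i x) (tA i y) (tA i z) Ax Ay Az) => E.
  - by apply: Or31; apply: (key Exy ti Ax E).
  - by apply: Or32; apply: (key Exz ti Ax E).
  - by apply: Or33; apply: (key Eyz ti Ay E).
apply: Or31; apply: (key0 Exy) => i ti; apply/eqP.
by move: (none i); rewrite ti eqxx /= => /negbFE.
Qed.

Lemma n_le : (n <= 2 * #|[set col_support A j | j : 'I_n]|)%N.
Proof.
rewrite -{1}(card_ord n) -[#|'I_n|]sum1_card.
rewrite (partition_big (fun j => col_support A j) (mem [set col_support A j | j : 'I_n])) /=;
  last by move=> j _; apply: imset_f.
rewrite mulnC -sum_nat_const; apply: leq_sum => X _.
apply: leq_trans (mult X).
by rewrite sum1_card; apply: subset_leq_card; apply/subsetP => j; rewrite !inE.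
Qed.
End Mult.

Local Open Scope ring_scope.

Lemma card_sets_ord k : #|{: {set 'I_k}}| = (2 ^ k)%N.
Proof. by rewrite -cardsT -powersetT card_powerset cardsT card_ord. Qed.

Lemma build (R : realType) m n k (A : 'M[R]_(m, n)) (I : {set 'I_m}) :
  ternary A -> #|I| = k -> shatters [set col_support A j | j : 'I_n] I ->
  exists (f : 'I_k -> 'I_m) (g : 'I_(2 ^ k) -> 'I_n),
    [/\ injective f, injective g, (forall i, f i \in I) & sauer_matrix (mxsub f g A)].
Proof.
move=> tA HI /shattersP sh.
pose f (i : 'I_k) : 'I_m := enum_val (cast_ord (esym HI) i).
have finj : injective f by move=> x y /enum_val_inj /cast_ord_inj.
have fI : forall i, f i \in I by move=> i; apply: enum_valP.
pose Xs (j : 'I_(2 ^ k)) : {set 'I_k} := enum_val (cast_ord (esym (card_sets_ord k)) j).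
have Xinj : injective Xs by move=> x y /enum_val_inj /cast_ord_inj.
have Xsurj : forall X, Xs (cast_ord (card_sets_ord k) (enum_rank X)) = X.
  by move=> X; rewrite /Xs cast_ordK enum_rankK.
have gP : forall j, exists c, col_support A c :&: I == f @: Xs j.
  move=> j; have sub : f @: Xs j \subset I.
    by apply/subsetP => x /imsetP[y _ ->]; apply: fI.
  have [X0 /imsetP[c _ ->] E] := sh _ sub.
  by exists c; rewrite E.
pose g j := xchoose (gP j).
have Hg : forall j, col_support A (g j) :&: I = f @: Xs j.
  by move=> j; apply/eqP; apply: (xchooseP (gP j)).
have Hs : forall j, col_support (mxsub f g A) j = Xs j.
  move=> j; apply/setP => i; rewrite !inE mxE -(mem_imset _ _ finj) -Hg !inE fI andbT.
  by [].
have ginj : injective g.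
  move=> x y E; apply: Xinj; by rewrite -!Hs; apply/setP => i; rewrite !inE !mxE E.
exists f, g; split=> //; split.
  by move=> i j; rewrite mxE; apply: tA.
move=> X; exists (cast_ord (card_sets_ord k) (enum_rank X)); split.
  by rewrite Hs Xsurj.
by move=> y; rewrite Hs => E; apply: Xinj; rewrite Xsurj.
Qed.

Local Open Scope ring_scope.

Section No3.
Variable R : realType.

Lemma pm1_cases (x : R) : x \in [:: -1; 0; 1] -> x != 0 -> x = 1 \/ x = -1.
Proof. by rewrite !inE => /or3P[]/eqP->; rewrite ?eqxx ?oppr_eq0 ?oner_eq0; auto. Qed.

Lemma pm1_sq (x : R) : x \in [:: -1; 0; 1] -> x != 0 -> x * x = 1.
Proof. by move=> H1 H2; case: (pm1_cases H1 H2) => ->; rewrite ?mulrNN mulr1. Qed.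

Lemma noTU3 k (S : 'M[R]_(k, 2 ^ k)) : (2 < k)%N -> sauer_matrix S -> tot1sub S -> False.
Proof.
move=> k2 [tS Hu] T.
have ex : forall X, exists j, col_support S j = X.
  by move=> X; have [j [Hj _]] := Hu X; exists j.
have nz : forall j X i, col_support S j = X -> (S i j != 0) = (i \in X).
  by move=> j X i <-; rewrite inE.
have h0 : (0 < k)%N by apply: ltn_trans k2.
have h1 : (1 < k)%N by apply: ltn_trans k2.
pose i0 : 'I_k := Ordinal h0; pose i1 : 'I_k := Ordinal h1; pose i2 : 'I_k := Ordinal k2.
have v0 : val i0 = 0%N by [].
have v1 : val i1 = 1%N by [].
have v2 : val i2 = 2%N by [].
have n01 : i0 != i1 by rewrite -val_eqE v0 v1.
have n02 : i0 != i2 by rewrite -val_eqE v0 v2.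
have n12 : i1 != i2 by rewrite -val_eqE v1 v2.
have [ja Ha] := ex [set i0; i1].
have [jb Hb] := ex [set i1; i2].
have [jc Hc] := ex [set i0; i2].
have [jd Hd] := ex [set i0; i1; i2].
have ad : ja <> jd.
  move=> E; move: (nz ja _ i2 Ha) (nz jd _ i2 Hd); rewrite E => ->.
  by rewrite !inE -!val_eqE.
have bd : jb <> jd.
  move=> E; move: (nz jb _ i0 Hb) (nz jd _ i0 Hd); rewrite E => ->.
  by rewrite !inE -!val_eqE.
have cd : jc <> jd.
  move=> E; move: (nz jc _ i1 Hc) (nz jd _ i1 Hd); rewrite E => ->.
  by rewrite !inE -!val_eqE.
have ab : ja <> jb.
  move=> E; move: (nz ja _ i0 Ha) (nz jb _ i0 Hb); rewrite E => ->.
  by rewrite !inE -!val_eqE.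
have ac : ja <> jc.
  move=> E; move: (nz ja _ i1 Ha) (nz jc _ i1 Hc); rewrite E => ->.
  by rewrite !inE -!val_eqE.
have bc : jb <> jc.
  move=> E; move: (nz jb _ i1 Hb) (nz jc _ i1 Hc); rewrite E => ->.
  by rewrite !inE -!val_eqE.
have n01' : i0 <> i1 by apply/eqP.
have n02' : i0 <> i2 by apply/eqP.
have n12' : i1 <> i2 by apply/eqP.
have a0 : S i0 ja != 0 by rewrite (nz _ _ _ Ha) !inE eqxx.
have a1 : S i1 ja != 0 by rewrite (nz _ _ _ Ha) !inE eqxx orbT.
have a2 : S i2 ja = 0.
  by apply/eqP; move: (nz _ _ i2 Ha); rewrite !inE -!val_eqE /= => /negbFE.
have b1 : S i1 jb != 0 by rewrite (nz _ _ _ Hb) !inE eqxx.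
have b2 : S i2 jb != 0 by rewrite (nz _ _ _ Hb) !inE eqxx orbT.
have b0 : S i0 jb = 0.
  by apply/eqP; move: (nz _ _ i0 Hb); rewrite !inE -!val_eqE /= => /negbFE.
have c0 : S i0 jc != 0 by rewrite (nz _ _ _ Hc) !inE eqxx.
have c2 : S i2 jc != 0 by rewrite (nz _ _ _ Hc) !inE eqxx orbT.
have c1 : S i1 jc = 0.
  by apply/eqP; move: (nz _ _ i1 Hc); rewrite !inE -!val_eqE /= => /negbFE.
have d0 : S i0 jd != 0 by rewrite (nz _ _ _ Hd) !inE eqxx.
have d1 : S i1 jd != 0 by rewrite (nz _ _ _ Hd) !inE eqxx orbT.
have d2 : S i2 jd != 0 by rewrite (nz _ _ _ Hd) !inE eqxx !orbT.
have E1 : S i0 ja * S i1 jd = S i0 jd * S i1 ja.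
  apply: tern4 => //; try by rewrite (negbTE a0) (negbTE d0) ?(negbTE a1) ?(negbTE d1).
    by rewrite (negbTE d1) (negbTE a1).
  exact: tot1sub_2 T n01' ad.
have E2 : S i1 jb * S i2 jd = S i1 jd * S i2 jb.
  apply: tern4 => //; first by rewrite (negbTE b1) (negbTE d1).
    by rewrite (negbTE d2) (negbTE b2).
  exact: tot1sub_2 T n12' bd.
have E3 : S i0 jc * S i2 jd = S i0 jd * S i2 jc.
  apply: tern4 => //; first by rewrite (negbTE c0) (negbTE d0).
    by rewrite (negbTE d2) (negbTE c2).
  exact: tot1sub_2 T n02' cd.
have D := tot1sub_3 T n01' n02' n12' ab ac bc.
rewrite a2 b0 c1 in D.
have sq0 := pm1_sq (tS i0 jd) d0.
have sq1 := pm1_sq (tS i1 jd) d1.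
have sq2 := pm1_sq (tS i2 jd) d2.
have Ea1 : S i1 ja = S i0 ja * S i1 jd * S i0 jd.
  by rewrite E1 [RHS]mulrC mulrA sq0 mul1r.
have Eb2 : S i2 jb = S i1 jb * S i2 jd * S i1 jd.
  by rewrite E2 [RHS]mulrC mulrA sq1 mul1r.
have Ec0 : S i0 jc = S i2 jc * S i0 jd * S i2 jd.
  by rewrite [S i2 jc * S i0 jd]mulrC -E3 -mulrA sq2 mulr1.
move: D; rewrite Ec0 Ea1 Eb2.
set x := S i0 ja; set y := S i1 jb; set z := S i2 jc.
set p := S i0 jd; set q := S i1 jd; set r := S i2 jd.
have -> : x * (y * z - 0 * (y * r * q)) - 0 * (x * q * p * z - 0 * 0) +
  z * p * r * (x * q * p * (y * r * q) - y * 0) = x * y * z * (1 + (p * p) * (q * q) * (r * r)).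
  by ring.
rewrite sq0 sq1 sq2 !mul1r.
rewrite /x /y /z; case: (pm1_cases (tS i0 ja) a0) => ->; case: (pm1_cases (tS i1 jb) b1) => ->;
  case: (pm1_cases (tS i2 jc) c2) => ->; rewrite ler_norml => /andP[]; lra.
Qed.
End No3.

Local Open Scope ring_scope.

Section Small.
Variable R : realType.

Lemma sauer_of k (S : 'M[R]_(k, 2 ^ k)) : ternary S -> injective (col_support S) ->
  sauer_matrix S.
Proof.
move=> tS inj; split=> // X.
have cr : (#|{: {set 'I_k}}| <= #|'I_(2 ^ k)|)%N by rewrite card_sets_ord card_ord.
have /codomP[j Ej] := inj_card_onto inj cr X.
by exists j; split=> // y Ey; apply: inj; rewrite Ey.
Qed.

Lemma det_mxsub2 m n (M : 'M[R]_(m, n)) (f : 'I_2 -> 'I_m) (g : 'I_2 -> 'I_n) :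
  \det (mxsub f g M) = M (f (inord 0)) (g (inord 0)) * M (f (inord 1)) (g (inord 1))
                     - M (f (inord 0)) (g (inord 1)) * M (f (inord 1)) (g (inord 0)).
Proof.
have -> : mxsub f g M = \matrix_(i < 2, j < 2)
   (fun a b => M (f (inord a)) (g (inord b))) i j.
  by apply/matrixP => i j; rewrite !mxE !inord_val.
by rewrite (det2F (fun a b => M (f (inord a)) (g (inord b)))).
Qed.

Lemma inord01 : (inord 0 : 'I_2) != inord 1.
Proof. by rewrite -val_eqE /= !inordK. Qed.

Variable Delta : nat.
Hypothesis D2 : (2 <= Delta)%N.
Let e : R := Delta%:R^-1.
Lemma e_pos : 0 < e.
Proof. by rewrite invr_gt0 ltr0n (leq_trans _ D2). Qed.
Lemma e_half : e <= 1 / 2.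
Proof.
rewrite /e mul1r lef_pV2 ?ler_nat // posrE ltr0n //; exact: leq_trans D2.
Qed.
Lemma e_grid : e = (1 : int)%:~R / Delta%:R.
Proof. by rewrite /e mul1r. Qed.

Lemma ex1 : exists S : 'M[R]_(1, 2 ^ 1), sauer_matrix S /\
  exists t : 'cV[R]_1, [/\ in_unit_cube t, in_grid Delta t, t != 0 & tot1sub (translate t S)].
Proof.
have ep := e_pos; have eh := e_half.
exists (\matrix_(i < 1, j < 2 ^ 1) (if val j == 1%N then -1 else 0)); split.
  apply: sauer_of.
    by move=> i [[|[|?]] ?]; rewrite mxE //= !inE eqxx ?orbT.
  move=> [[|[|?]] ?] [[|[|?]] ?] // /setP/(_ ord0); rewrite !inE !mxE /=;
    rewrite ?oppr_eq0 ?oner_eq0 ?eqxx => H; apply/val_inj; move: H => /=; congruence.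
exists (\col_(i < 1) e); split.
- by move=> i; rewrite mxE; apply/andP; split; lra.
- by move=> i; exists 1; rewrite mxE e_grid.
- by apply/eqP => /matrixP/(_ ord0 ord0); rewrite !mxE; lra.
move=> [|[|p]] f g fi gi.
- by rewrite det_mx00 normr1.
- rewrite det_mx11 !mxE; case: (g ord0) => [[|[|?]] ?] /=; rewrite ler_norml;
    apply/andP; split; lra.
- by have := leq_card f fi; rewrite !card_ord.
Qed.

Lemma ex2 : exists S : 'M[R]_(2, 2 ^ 2), sauer_matrix S /\
  exists t : 'cV[R]_2, [/\ in_unit_cube t, in_grid Delta t, t != 0 & tot1sub (translate t S)].
Proof.
have ep := e_pos; have eh := e_half.
exists (\matrix_(i < 2, j < 2 ^ 2)
   (if val i == 0%N then (if odd j then -1 else 0) else (if (2 <= j)%N then 1 else 0))).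
split.
  apply: sauer_of.
    by move=> [[|[|?]] ?] [[|[|[|[|?]]]] ?]; rewrite mxE //= !inE eqxx ?orbT.
  move=> j j' /setP E; have E0 := E (inord 0); have E1 := E (inord 1).
  move: E0 E1; rewrite !inE !mxE /= !inordK //; clear E.
  move: j j' => [[|[|[|[|?]]]] ?] [[|[|[|[|?]]]] ?] //=;
    rewrite ?oppr_eq0 ?oner_eq0 ?eqxx => H1 H2; apply/val_inj; move: H1 H2 => /=; congruence.
exists (\col_(i < 2) (if val i == 0%N then e else 0)); split.
- by move=> [[|[|?]] ?]; rewrite mxE //=; apply/andP; split; lra.
- by move=> [[|[|?]] ?]; rewrite mxE /=; [exists 1; rewrite e_grid | exists 0; rewrite mul0r | ].
- by apply/eqP => /matrixP/(_ ord0 ord0); rewrite !mxE /=; lra.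
move=> [|[|[|p]]] f g fi gi.
- by rewrite det_mx00 normr1.
- rewrite det_mx11 !mxE; case: (f ord0) => [[|[|?]] ?]; case: (g ord0) => [[|[|[|[|?]]]] ?] //=;
    rewrite ler_norml; apply/andP; split; lra.
- rewrite det_mxsub2 !mxE.
  have nf : f (inord 0) != f (inord 1) by apply: contra inord01 => /eqP/fi ->.
  have ng : g (inord 0) != g (inord 1) by apply: contra inord01 => /eqP/gi ->.
  move: (f (inord 0)) (f (inord 1)) (g (inord 0)) (g (inord 1)) nf ng.
  move=> [[|[|?]] ?] [[|[|?]] ?] [[|[|[|[|?]]]] ?] [[|[|[|[|?]]]] ?] //=;
    rewrite -?val_eqE //= => _ _; rewrite ler_norml; apply/andP; split; lra.
- by have := leq_card f fi; rewrite !card_ord.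
Qed.
End Small.

Local Open Scope ring_scope.

Lemma delta_ge2 (R : realType) m Delta (t : 'cV[R]_m) : (0 < Delta)%N ->
  in_unit_cube t -> in_grid Delta t -> t != 0 -> (2 <= Delta)%N.
Proof.
move=> D0 tU tG tnz.
have [i ti] : exists i, t i 0 != 0.
  case: (pickP (fun i => t i 0 != 0)) => [i Hi|none]; first by exists i.
  move: tnz; suff -> : t = 0 by rewrite eqxx.
  apply/matrixP => i j; rewrite (ord1 j) mxE; apply/eqP.
  by move: (none i) => /negbFE.
case: Delta D0 tG => [//|[|D]] _ tG; last by [].
have [z Ez] := tG i; have /andP[t0 t1] := tU i.
move: t0 t1 ti; rewrite Ez divr1 le_eqVlt => /orP[/eqP<-|]; first by rewrite eqxx.
by rewrite ltr0z ltrz1 => H1 H2 _; lia.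
Qed.

Lemma extract (R : realType) m n k (t : 'cV[R]_m) (A : 'M[R]_(m, n)) :
  in_unit_cube t -> ternary A -> injective (fun j => col j A) -> tot1sub (translate t A) ->
  (heller_bound m k < n)%N ->
  exists (S : 'M[R]_(k, 2 ^ k)) (f : 'I_k -> 'I_m),
    [/\ sauer_matrix S, injective f &
        tot1sub (translate (\col_i t (f i) 0) S)].
Proof.
move=> tU tA Ainj tT Hn.
have Hb := n_le tU tA Ainj tT.
have Hs : (\sum_(i < k) 'C(#|'I_m|, i) < #|[set col_support A j | j : 'I_n]|)%N.
  rewrite card_ord -(@ltn_pmul2l 2) //; exact: leq_trans Hn Hb.
have [I shI cI] := sauer_shelah Hs.
have [f [g [fi gi fI sS]]] := build tA cI shI.
exists (mxsub f g A), f; split=> //.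
have -> : translate (\col_i t (f i) 0) (mxsub f g A) = mxsub f g (translate t A).
  by apply/matrixP => i j; rewrite !mxE.
exact: tot1sub_mxsub.
Qed.

Unset Implicit Arguments. Set Strict Implicit. Set Printing Implicit Defensive.
Theorem proposition3p4 (R : realType) (m k Delta : nat) :
  (0 < m)%N -> (0 < k)%N -> (0 < Delta)%N -> (k < m)%N ->
  ((forall S : 'M[R]_(k, 2 ^ k), sauer_matrix S -> ~ feasible_for_translations S) ->
     forall n : nat, shifted_heller_witness R m n -> (n <= heller_bound m k)%N)
  /\
  ((forall S : 'M[R]_(k, 2 ^ k), sauer_matrix S ->
      ~ (exists t : 'cV[R]_k,
           [/\ in_unit_cube t, in_grid Delta t, t != 0 & tot1sub (translate t S)])) ->
     forall n : nat, shifted_heller_delta_witness R m Delta n -> (n <= heller_bound m k)%N).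
Proof.
move=> Hm Hk HD Hkm; split.
  move=> Hyp n [t [A [tU tnz tA Ainj tT]]]; rewrite leqNgt; apply/negP => Hn.
  have [S [f [sS fi T]]] := @extract _ _ _ k _ _ tU tA Ainj tT Hn.
  apply: (Hyp S sS); exists (\col_i t (f i) 0); split=> //.
  by move=> i; rewrite mxE.
move=> Hyp n [t [A [[tU tG] tnz tA Ainj tT]]]; rewrite leqNgt; apply/negP => Hn.
have D2 := delta_ge2 HD tU tG tnz.
have [k2|k2] := leqP k 2.
  have [Ek|k1] := eqVneq k 1%N.
    subst k; by have [S [sS [t' Ht']]] := ex1 R D2; apply: (Hyp S sS); exists t'.
  have Ek : k = 2%N by lia.
  subst k; by have [S [sS [t' Ht']]] := ex2 R D2; apply: (Hyp S sS); exists t'.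
have [S [f [sS fi T]]] := @extract _ _ _ k _ _ tU tA Ainj tT Hn.
have [r0|rn0] := eqVneq (\col_i t (f i) 0) 0.
  apply: (noTU3 k2 sS); move: T; rewrite r0.
  have -> : translate 0 S = S by apply/matrixP => i j; rewrite !mxE add0r.
  by [].
apply: (Hyp S sS); exists (\col_i t (f i) 0); split=> //.
  by move=> i; rewrite mxE.
by move=> i; rewrite mxE.
Qed.
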